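(* Let $H<G$ and $H'<G'$ be countable abelian groups such that all elements of $G/H$ and of $G'/H'$ have odd order, and suppose $r:H\to H'$ is an isomorphism. Let $\|\cdot\|_H$ be a proper norm on $H$ and $\|\cdot\|_{H'}=\|r^{-1}(\cdot)\|_H$ the induced norm on $H'$. Suppose there are one-step ascending chains $\mathcal L=\{G_0<G_1<\cdots\}$ and $\mathcal L'=\{G'_0<G'_1<\cdots\}$ associated to $H$ and $H'$ respectively with equal sequences of indexes. Let $d_G$ and $d_{G'}$ be the pseudo-ultrametrics generated by $(\|\cdot\|_H,\mathcal L)$ and $(\|\cdot\|_{H'},\mathcal L')$ (with any admissible sequences $\{K_n\}$, $\{K'_n\}$). Then $(G,d_G)$ and $(G',d_{G'})$ are coarsely equivalent, and the coarse equivalence can be chosen to be bijective.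
   Context: Proper norm: $\|g\|=0$ iff $g=0$, $\|-g\|=\|g\|$, subadditive, finite balls. One-step ascending chain of a countable locally finite group $Q$: $\{0\}=Q_0<Q_1<\cdots$, $\bigcup Q_i=Q$, with $q_i$ such that $Q_i=\langle q_1,\dots,q_i\rangle$ and $q_{i+1}\notin Q_i$; the chain associated to $H$ is $G_i=\pi^{-1}(Q_i)$ ($\pi:G\to G/H$), with generators $g_i\in\pi^{-1}(q_i)$ and indexes $m_i=[G_i:G_{i-1}]=2k_i+1$. Every $g\in G$ has a unique representation $g=h_g+\sum r_ig_i$ with $h_g\in H$, $r_i\in[-k_i,k_i]\cap\mathbb Z$, almost all zero. Given positive $K_n$ strictly increasing to $\infty$ with $K_n\ge\sum_{i=1}^n(n-i+1)\|h_{m_ig_i}\|_H$ (admissible), the pseudo-ultrametric generated is $d_G(x,y)=\|y-x\|_G$ where $\|g\|_G=\|h_g\|_H+\|\pi(\sum r_ig_i)\|_{G/H}$ and $\|x\|_{G/H}=K_i$ for $x\in Q_i\setminus Q_{i-1}$, $\|0\|_{G/H}=0$. A coarse equivalence is a map $f$ such that for each $\delta$ there is $\epsilon$ with $d(x,y)\le\delta\Rightarrow d(f x,f y)\le\epsilon$, with a map $g$ of the same kind such that $fg$, $gf$ are at bounded distance from the identities. *)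

(* Defs.v *)
From HB Require Import structures.
From mathcomp Require Import all_boot all_order all_algebra.
From mathcomp Require Import reals.
From Stdlib Require Import ClassicalEpsilon.
Set Implicit Arguments. Unset Strict Implicit. Unset Printing Implicit Defensive.
Import Order.TTheory GRing.Theory Num.Theory.
Local Open Scope ring_scope.

Definition countable_type (T : Type) : Prop := exists f : T -> nat, injective f.

Definition subgroup (G : zmodType) (H : G -> Prop) : Prop :=
  H 0 /\ forall x y, H x -> H y -> H (x - y).

Definition odd_order_mod (G : zmodType) (H : G -> Prop) (x : G) : Prop :=
  exists n : nat, (0 < n)%N /\ H (x *+ n) /\
    (forall k : nat, (0 < k < n)%N -> ~ H (x *+ k)) /\ odd n.

Definition iso_on (G G' : zmodType) (H : G -> Prop) (H' : G' -> Prop)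
  (r : G -> G') : Prop :=
  (forall x, H x -> H' (r x)) /\
  (forall x y, H x -> H y -> r (x + y) = r x + r y) /\
  (forall x y, H x -> H y -> r x = r y -> x = y) /\
  (forall y, H' y -> exists2 x, H x & r x = y).

Definition proper_norm (R : realType) (G : zmodType) (H : G -> Prop)
  (nH : G -> R) : Prop :=
  (forall x, H x -> (nH x = 0 <-> x = 0)) /\
  (forall x, H x -> nH (- x) = nH x) /\
  (forall x y, H x -> H y -> nH (x + y) <= nH x + nH y) /\
  (forall rho : R, exists s : seq G, forall x, H x -> nH x <= rho -> x \in s).

(* G_i = pi^{-1}(<q_1,...,q_i>) where q_j = pi(g_j); G_0 = H. *)
Definition chain_level (G : zmodType) (H : G -> Prop) (g : nat -> G) (i : nat)
  : G -> Prop :=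
  fun x => exists c : nat -> int, H (x - \sum_(1 <= j < i.+1) g j *~ c j).

Definition one_step_chain (G : zmodType) (H : G -> Prop) (g : nat -> G) : Prop :=
  (forall i : nat, ~ chain_level H g i (g i.+1)) /\
  (forall x, exists i, chain_level H g i x).

Definition has_index (G : zmodType) (A B : G -> Prop) (n : nat) : Prop :=
  exists f : 'I_n -> G, (forall k, A (f k)) /\
    (forall a, A a -> exists! k, B (a - f k)).

(* k_i with m_i = 2 k_i + 1 *)
Definition half_range (m : nat -> nat) (i : nat) : nat := ((m i).-1)./2.

Definition chain_repr (G : zmodType) (H : G -> Prop) (g : nat -> G)
  (m : nat -> nat) (x h : G) : Prop :=
  H h /\ exists (r : nat -> int) (N : nat),
    (forall i, (N <= i)%N -> r i = 0) /\
    (forall i, (1 <= i)%N -> `|r i| <= (half_range m i)%:Z) /\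
    x = h + \sum_(1 <= i < N) g i *~ r i.

Definition hpart (G : zmodType) (H : G -> Prop) (g : nat -> G)
  (m : nat -> nat) (x : G) : G :=
  epsilon (inhabits 0) (fun h => chain_repr H g m x h).

(* The norm on G/H, lifted to G: K_i on G_i \ G_{i-1} (i >= 1), 0 on H. *)
Definition quot_norm (R : realType) (G : zmodType) (H : G -> Prop)
  (g : nat -> G) (K : nat -> R) (x : G) : R :=
  epsilon (inhabits 0) (fun v =>
    (H x /\ v = 0) \/
    exists i : nat, (1 <= i)%N /\ chain_level H g i x /\
      ~ chain_level H g i.-1 x /\ v = K i).

Definition gnorm (R : realType) (G : zmodType) (H : G -> Prop) (g : nat -> G)
  (m : nat -> nat) (nH : G -> R) (K : nat -> R) (x : G) : R :=
  nH (hpart H g m x) + quot_norm H g K (x - hpart H g m x).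

Definition gdist (R : realType) (G : zmodType) (H : G -> Prop) (g : nat -> G)
  (m : nat -> nat) (nH : G -> R) (K : nat -> R) (x y : G) : R :=
  gnorm H g m nH K (y - x).

Definition admissible (R : realType) (G : zmodType) (H : G -> Prop)
  (g : nat -> G) (m : nat -> nat) (nH : G -> R) (K : nat -> R) : Prop :=
  (forall n, (1 <= n)%N -> 0 < K n) /\
  (forall n, (1 <= n)%N -> K n < K n.+1) /\
  (forall M : R, exists n, (1 <= n)%N /\ M < K n) /\
  (forall n, (1 <= n)%N ->
     \sum_(1 <= i < n.+1) (n - i + 1)%:R * nH (hpart H g m (g i *+ m i)) <= K n).

Definition coarse_map (R : realType) (X Y : Type) (dX : X -> X -> R)
  (dY : Y -> Y -> R) (f : X -> Y) : Prop :=
  forall delta : R, exists eps : R, forall x y,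
    dX x y <= delta -> dY (f x) (f y) <= eps.

Definition coarse_equivalence (R : realType) (X Y : Type) (dX : X -> X -> R)
  (dY : Y -> Y -> R) (f : X -> Y) : Prop :=
  coarse_map dX dY f /\
  exists h : Y -> X, coarse_map dY dX h /\
    (exists C : R, forall x, dX (h (f x)) x <= C) /\
    (exists C : R, forall y, dY (f (h y)) y <= C).

(* Main.v *)
Require Import Defs.
From HB Require Import structures.
From mathcomp Require Import all_boot all_order all_algebra.
From mathcomp Require Import reals.
From mathcomp Require Import zify.
From Stdlib Require Import ClassicalEpsilon Classical.
From mathcomp Require Import lra.
Set Implicit Arguments. Unset Strict Implicit. Unset Printing Implicit Defensive.
Import Order.TTheory GRing.Theory Num.Theory.
Local Open Scope ring_scope.
Section SG.
Variables (G : zmodType) (P : G -> Prop).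
Hypothesis sP : subgroup P.
Lemma sg0 : P 0. Proof. by case: sP. Qed.
Lemma sgB x y : P x -> P y -> P (x - y). Proof. by case: sP => _; apply. Qed.
Lemma sgN x : P x -> P (- x).
Proof. by move=> Px; rewrite -sub0r; apply: sgB => //; exact: sg0. Qed.
Lemma sgD x y : P x -> P y -> P (x + y).
Proof. by move=> Px Py; rewrite -[y]opprK; apply: sgB => //; exact: sgN. Qed.
Lemma sgMn x n : P x -> P (x *+ n).
Proof. move=> Px; elim: n => [|n IH]; first by rewrite mulr0n; exact: sg0. by rewrite mulrS; apply: sgD. Qed.
Lemma sgMz x z : P x -> P (x *~ z).
Proof. move=> Px; case: z => n; first exact: sgMn.
by rewrite NegzE mulrNz; apply: sgN; apply: sgMn. Qed.
End SG.
Lemma subrBB (G : zmodType) (x y a b : G) : x - y - (a - b) = (x - a) - (y - b).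
Proof. by rewrite !opprB !addrA [x - a + b]addrAC [x + b - a - y]addrAC [x + b - y]addrAC. Qed.

Definition S (G : zmodType) (g : nat -> G) (c : nat -> int) (n : nat) : G :=
  \sum_(1 <= j < n) g j *~ c j.

Lemma S_rec (G : zmodType) (g : nat -> G) c n : (1 <= n)%N -> S g c n.+1 = S g c n + g n *~ c n.
Proof. by move=> h; rewrite /S big_nat_recr. Qed.
Lemma S_le1 (G : zmodType) (g : nat -> G) c n : (n <= 1)%N -> S g c n = 0.
Proof. by move=> h; rewrite /S big_geq. Qed.
Lemma S_eq (G : zmodType) (g : nat -> G) c c' n : (forall i, (1 <= i < n)%N -> c i = c' i) -> S g c n = S g c' n.
Proof. by move=> h; apply: eq_big_nat => i /h ->. Qed.
Lemma S_B (G : zmodType) (g : nat -> G) c c' n : S g (fun i => c i - c' i) n = S g c n - S g c' n.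
Proof. by rewrite /S -sumrB; apply: eq_bigr => i _; rewrite mulrzBr. Qed.
Lemma S_D (G : zmodType) (g : nat -> G) c c' n : S g (fun i => c i + c' i) n = S g c n + S g c' n.
Proof. by rewrite /S -big_split; apply: eq_bigr => i _; rewrite mulrzDr. Qed.
Lemma S_zero (G : zmodType) (g : nat -> G) n : S g (fun _ => 0) n = 0.
Proof. by rewrite /S big1 // => i _; rewrite mulr0z. Qed.
Lemma S_ext (G : zmodType) (g : nat -> G) c n p : (n <= p)%N -> (forall i, (n <= i)%N -> c i = 0) -> S g c n = S g c p.
Proof.
move=> le h; elim: p le => [|p IH]; first by rewrite leqn0 => /eqP ->.
rewrite leq_eqVlt => /orP [/eqP -> //|]; rewrite ltnS => le.
have [p0|p1] := leqP p 0.
  by rewrite !S_le1 // ?(leq_trans le) ?(leq_trans p0).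
by rewrite S_rec // -IH // h // mulr0z addr0.
Qed.

Section Chain.
Variables (G : zmodType) (H : G -> Prop) (g : nat -> G).
Hypothesis sH : subgroup H.
Local Notation L := (chain_level H g).

Lemma Ldef i x : L i x <-> exists c, H (x - S g c i.+1).
Proof. by []. Qed.

Lemma L0 x : L 0 x <-> H x.
Proof. split; first by case/Ldef=> c; rewrite (S_le1 _ _ (leqnn 1)) subr0.
by move=> hx; apply/Ldef; exists (fun _ => 0); rewrite (S_le1 _ _ (leqnn 1)) subr0. Qed.

Lemma LS i x : L i.+1 x <-> exists t, L i (x - g i.+1 *~ t).
Proof.
split.
  case/Ldef=> c hc; exists (c i.+1); apply/Ldef; exists c.
  by rewrite S_rec // opprD addrA addrAC in hc.
case=> t /Ldef [c hc]; apply/Ldef; exists (fun j => if j == i.+1 then t else c j).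
rewrite S_rec // eqxx (@S_eq _ _ _ c); first by rewrite opprD addrA addrAC.
by move=> j /andP [_ hj]; rewrite ltn_eqF.
Qed.

Lemma L_sub i : subgroup (L i).
Proof.
split; first by apply/Ldef; exists (fun _ => 0); rewrite S_zero subr0; exact: sg0.
move=> x y /Ldef [c hc] /Ldef [c' hc']; apply/Ldef; exists (fun j => c j - c' j); rewrite S_B.
have -> : x - y - (S g c i.+1 - S g c' i.+1) = (x - S g c i.+1) - (y - S g c' i.+1).
  exact: subrBB.
exact: sgB.
Qed.

Lemma L_mono i x : L i x -> L i.+1 x.
Proof. by move=> h; apply/LS; exists 0; rewrite mulr0z subr0. Qed.

Lemma L_mono_le i j x : (i <= j)%N -> L i x -> L j x.
Proof. elim: j => [|j IH]; first by rewrite leqn0 => /eqP ->.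
rewrite leq_eqVlt => /orP [/eqP -> //| ]; rewrite ltnS => le h; apply: L_mono; exact: IH. Qed.

Lemma L_H i x : H x -> L i x.
Proof. by move=> /L0; apply: L_mono_le. Qed.

Lemma Lg i : L i.+1 (g i.+1).
Proof. by apply/LS; exists 1; rewrite mulr1z subrr; exact: (sg0 (L_sub i)). Qed.

Lemma LgS i j : (1 <= j <= i)%N -> L i (g j).
Proof. case/andP; case: j => // j _ le; apply: (L_mono_le le); exact: Lg. Qed.

Lemma LSc c i : L i (S g c i.+1).
Proof. elim: i => [|i IH]; first by rewrite S_le1 //; exact: (sg0 (L_sub 0)).
apply/LS; exists (c i.+1); rewrite S_rec // addrK //. Qed.

End Chain.

Lemma min_ex (P : nat -> Prop) n : P n -> exists k, P k /\ forall j, (j < k)%N -> ~ P j.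
Proof.
move=> Pn; apply: NNPP => hno.
suff: forall k j, (j <= k)%N -> ~ P j by move/(_ n n (leqnn n)).
elim=> [|k IH] j le Pj.
  by apply: hno; exists j; split=> // i; move: le; rewrite leqn0 => /eqP ->.
apply: hno; exists j; split=> // i lt Pi; apply: (IH i) => //; lia.
Qed.

Section Order.
Variables (G : zmodType) (H : G -> Prop) (g : nat -> G) (m : nat -> nat).
Hypothesis sH : subgroup H.
Hypothesis hodd : forall x, odd_order_mod H x.
Hypothesis hidx : forall i, (1 <= i)%N -> has_index (chain_level H g i) (chain_level H g i.-1) (m i).
Local Notation L := (chain_level H g).

Lemma subrr2 (x y z : G) : x - z - (y - z) = x - y.
Proof. by rewrite subrBB subrr subr0. Qed.

Lemma order_facts n : [/\ (0 < m n.+1)%N, L n (g n.+1 *+ m n.+1),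
  (forall j, (0 < j < m n.+1)%N -> ~ L n (g n.+1 *+ j)) & odd (m n.+1)].
Proof.
set a := g n.+1; set M := m n.+1.
have sL := L_sub g sH n; have sL1 := L_sub g sH n.+1.
case: (hodd a) => N [N0 [HN [_ oddN]]].
have [o [[o0 Lo] omin]] := @min_ex (fun j => (0 < j)%N /\ L n (a *+ j)) N (conj N0 (L_H g n HN)).
have odvd : forall j, L n (a *+ j) -> (o %| j)%N.
  move=> j Lj; rewrite /dvdn; apply/eqP; apply: NNPP => hne.
  apply: (omin (j %% o)%N); first by rewrite ltn_pmod.
  split; first by rewrite lt0n; apply/eqP.
  have -> : a *+ (j %% o) = a *+ j - (a *+ o) *+ (j %/ o).
    by rewrite {2}(divn_eq j o) mulrnDr mulnC mulrnA addrAC subrr add0r.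
  by apply: sgB => //; apply: sgMn.
have oddo : odd o.
  by apply: (dvdn_odd _ oddN); apply: odvd; exact: L_H.
have Lat : forall t, L n.+1 (a *+ t) by move=> t; apply: sgMn => //; exact: Lg.
have oeq : o = M.
  have [f [hf1 hf2]] := hidx (ltn0Sn n).
  have z0 : forall x, (o %| x)%N -> (x < o)%N -> x = 0%N.
    move=> x d lt; case: x d lt => // x d lt; have := dvdn_leq (ltn0Sn x) d; lia.
  have hphi : forall t : 'I_o, exists k, L n (a *+ t - f k).
    by move=> t; case: (hf2 _ (Lat t)) => k [hk _]; exists k.
  pose phi t := proj1_sig (constructive_indefinite_description _ (hphi t)).
  have phiP : forall t : 'I_o, L n (a *+ t - f (phi t)) by move=> t; rewrite /phi; case: constructive_indefinite_description.
  have RED : forall c : int, exists t, (t < o)%N /\ L n (a *~ c - a *+ t).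
    move=> c; have o0' : (o%:Z != 0) by rewrite eqz_nat -lt0n.
    have ge := modz_ge0 c o0'.
    have lt := @ltz_pmod c o%:Z (ltac:(by rewrite ltz_nat)).
    have dq := divz_eq c o.
    exists `|(c %% o)%Z|%N; split; first by lia.
    have ec : c = (`|(c %% o)%Z|%N)%:Z + (c %/ o)%Z * o by lia.
    have -> : a *~ c - a *+ `|(c %% o)%Z|%N = (a *+ o) *~ (c %/ o)%Z.
      rewrite {1}ec mulrzDr mulrzA mulrzAC.
      change (a *+ `|(c %% o)%Z|%N + a *~ o *~ (c %/ o)%Z - a *+ `|(c %% o)%Z|%N = a *~ o *~ (c %/ o)%Z).
      by rewrite addrAC subrr add0r.
    by apply: sgMz.
  have hpsi : forall k : 'I_M, exists t : 'I_o, L n (f k - a *+ t).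
    move=> k; case/LS: (hf1 k) => c Lc; case: (RED c) => t [lt Lt].
    exists (Ordinal lt); have := sgD sL Lc Lt.
    by rewrite addrA subrK.
  pose psi k := proj1_sig (constructive_indefinite_description _ (hpsi k)).
  have psiP : forall k : 'I_M, L n (f k - a *+ psi k) by move=> k; rewrite /psi; case: constructive_indefinite_description.
  apply/eqP; rewrite eqn_leq; apply/andP; split.
    have : injective phi.
      move=> t1 t2 e; have := sgB sL (phiP t1) (phiP t2); rewrite e subrr2 => L12.
      apply: val_inj => /=.
      have [le|le] := leqP t2 t1.
        have : L n (a *+ (t1 - t2)) by rewrite mulrnBr.
        move/odvd => d; have := z0 _ d (ltac:(have := ltn_ord t1; lia)); lia.
      have : L n (a *+ (t2 - t1)).
        by rewrite mulrnBr ?(ltnW le) // -opprB; apply: sgN.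
      move/odvd => d; have := z0 _ d (ltac:(have := ltn_ord t2; lia)); lia.
    by move/leq_card; rewrite !card_ord.
  have : injective psi.
    move=> k1 k2 e; have := sgB sL (psiP k1) (psiP k2); rewrite e subrr2 => L12.
    case: (hf2 _ (hf1 k1)) => k [_ uk].
    rewrite -(uk k1) ?(uk k2) //; by rewrite subrr; exact: sg0.
  by move/leq_card; rewrite !card_ord.
rewrite -oeq; split=> // j /andP [j0 jo] Lj; exact: (omin j jo (conj j0 Lj)).
Qed.
End Order.

Definition valid (m : nat -> nat) (c : nat -> int) (N : nat) : Prop :=
  (forall i, (N <= i)%N -> c i = 0) /\ (forall i, (1 <= i)%N -> `|c i| <= (half_range m i)%:Z).

Section Repr.
Variables (G : zmodType) (H : G -> Prop) (g : nat -> G) (m : nat -> nat).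
Hypothesis sH : subgroup H.
Hypothesis hodd : forall x, odd_order_mod H x.
Hypothesis hidx : forall i, (1 <= i)%N -> has_index (chain_level H g i) (chain_level H g i.-1) (m i).
Local Notation L := (chain_level H g).

Lemma half_eq n : (2 * half_range m n.+1 + 1 = m n.+1)%N.
Proof.
have [M0 _ _ oM] := order_facts sH hodd hidx n.
rewrite /half_range; set M := m n.+1 in M0 oM *.
have := odd_double_half M; rewrite oM => e.
rewrite -{2}e -{1}e /= doubleK -mul2n; lia.
Qed.

Lemma L_zero n z : `|z| < (m n.+1)%:Z -> L n (g n.+1 *~ z) -> z = 0.
Proof.
have [M0 _ Mmin _] := order_facts sH hodd hidx n.
case: z => j.
  move=> lt Lj; case: j lt Lj => // j lt Lj; exfalso; apply: (Mmin j.+1 _ Lj).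
  by apply/andP; split => //; move: lt; lia.
move=> lt; rewrite NegzE mulrNz => Lj; exfalso; apply: (Mmin j.+1).
  by apply/andP; split => //; move: lt; rewrite NegzE normrN; lia.
by rewrite -[_ *+ _]opprK; apply: sgN => //; exact: L_sub.
Qed.

Lemma L_mult n q : L n (g n.+1 *~ (q * (m n.+1)%:Z)).
Proof.
have [_ LM _ _] := order_facts sH hodd hidx n.
rewrite mulrzA mulrzAC; apply: sgMz; first exact: L_sub.
exact: LM.
Qed.

Lemma digit_red n t : exists d, `|d| <= (half_range m n.+1)%:Z /\ L n (g n.+1 *~ t - g n.+1 *~ d).
Proof.
have he := half_eq n; have [M0 _ _ _] := order_facts sH hodd hidx n.
set M := m n.+1 in he M0 *; set k := half_range m n.+1 in he *.
have M0' : (M%:Z != 0) by rewrite eqz_nat -lt0n.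
have ge := modz_ge0 t M0'.
have lt := @ltz_pmod t M%:Z (ltac:(by rewrite ltz_nat)).
have dq := divz_eq t M.
have [le|gt] := lerP (t %% M)%Z k%:Z.
  exists (t %% M)%Z; split; first by lia.
  rewrite -mulrzBr (_ : t - _ = (t %/ M)%Z * M%:Z); first exact: L_mult.
  by lia.
exists ((t %% M)%Z - M%:Z); split; first by lia.
rewrite -mulrzBr (_ : t - _ = ((t %/ M)%Z + 1) * M%:Z); first exact: L_mult.
by lia.
Qed.

Lemma repr_exists n x : L n x -> exists h c, H h /\ valid m c n.+1 /\ x = h + S g c n.+1.
Proof.
elim: n x => [|n IH] x.
  move/L0=> hx; exists x, (fun _ => 0); split=> //; split.
    by split=> // i _; rewrite normr0.
  by rewrite S_le1 // addr0.
case/LS => t Lt; have [d [hd Ld]] := digit_red n t.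
have : L n (x - g n.+1 *~ d).
  have := sgD (L_sub g sH n) Lt Ld; by rewrite addrA subrK.
case/IH => h [c [hh [[vc1 vc2] ec]]].
exists h, (fun j => if j == n.+1 then d else c j); split=> //; split; first split.
- by move=> i le; case: eqP => [ei|_]; [lia | rewrite vc1 // ltnW].
- by move=> i le; case: eqP => [->|_] //; exact: vc2.
rewrite S_rec // eqxx (@S_eq _ _ _ c); last by move=> j /andP [_ hj]; rewrite ltn_eqF.
by rewrite addrA -ec subrK.
Qed.

Lemma uniq_core n e : (forall i, (1 <= i)%N -> `|e i| <= (2 * half_range m i)%:Z) ->
  H (S g e n.+1) -> forall i, (1 <= i <= n)%N -> e i = 0.
Proof.
move=> he; elim: n => [|n IH] HS i hi; first by lia.
have e0 : e n.+1 = 0.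
  apply: (@L_zero n).
    have := he n.+1 (ltn0Sn _); have := half_eq n; lia.
  have := sgB (L_sub g sH n) (L_H g n HS) (LSc g sH e n).
  by rewrite S_rec // addrC addKr.
move: HS; rewrite S_rec // e0 mulr0z addr0 => HS.
have [le|gt] := leqP i n; first by apply: IH => //; lia.
by have -> : i = n.+1 by lia.
Qed.

Lemma repr_uniq h1 c1 N1 h2 c2 N2 : H h1 -> H h2 -> valid m c1 N1 -> valid m c2 N2 ->
  h1 + S g c1 N1 = h2 + S g c2 N2 -> h1 = h2 /\ forall i, (1 <= i)%N -> c1 i = c2 i.
Proof.
move=> hh1 hh2 [v11 v12] [v21 v22] e.
set P := maxn N1 N2.
rewrite (@S_ext _ _ c1 N1 P.+1) ?(@S_ext _ _ c2 N2 P.+1) // in e; try lia.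
have HS : H (S g (fun i => c1 i - c2 i) P.+1).
  rewrite S_B.
  have -> : S g c1 P.+1 - S g c2 P.+1 = h2 - h1.
    by apply: (addrI h1); rewrite addrA e addrK [h1 + _]addrC subrK.
  exact: sgB.
have ceq : forall i, (1 <= i)%N -> c1 i = c2 i.
  move=> i i1; have [le|gt] := leqP i P.
    apply/eqP; rewrite -subr_eq0; apply/eqP.
    apply: (uniq_core _ HS); last by lia.
    by move=> j j1; have := v12 j j1; have := v22 j j1; lia.
  by rewrite v11 ?v21 //; lia.
split=> //.
by move: e; rewrite (@S_eq _ g c1 c2 P.+1) => [/addIr|j /andP [j1 _]]; [|exact: ceq].
Qed.

End Repr.

Definition dig (G : zmodType) (H : G -> Prop) (g : nat -> G) (m : nat -> nat) (x : G)
  : (nat -> int) * nat :=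
  epsilon (inhabits ((fun _ => 0), 0%N))
    (fun p => valid m p.1 p.2 /\ x = hpart H g m x + S g p.1 p.2).

Definition fmap (G G' : zmodType) (H : G -> Prop) (g : nat -> G) (m : nat -> nat)
  (g' : nat -> G') (r0 : G -> G') (x : G) : G' :=
  r0 (hpart H g m x) + S g' (dig H g m x).1 (dig H g m x).2.

Lemma S_same (G : zmodType) (g : nat -> G) m c N c' N' : valid m c N -> valid m c' N' ->
  (forall i, (1 <= i)%N -> c i = c' i) -> S g c N = S g c' N'.
Proof.
move=> [v1 _] [v1' _] e.
rewrite (@S_ext _ _ c N (maxn N N')) ?(@S_ext _ _ c' N' (maxn N N')) //; try lia.
by apply: S_eq => i /andP [i1 _]; apply: e.
Qed.

Fixpoint irange (B : nat) : seq int :=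
  match B with 0 => [:: 0] | B.+1 => B.+1%:Z :: - B.+1%:Z :: irange B end.

Lemma irangeP B v : `|v| <= B%:Z -> v \in irange B.
Proof.
elim: B => [|B IH] /= le; first by rewrite inE; apply/eqP; lia.
rewrite !inE; case: eqP => [//|ne1]; case: eqP => [//|ne2].
by rewrite IH //; lia.
Qed.

Fixpoint Dseq (G : zmodType) (g : nat -> G) (m : nat -> nat) (n : nat) : seq G :=
  match n with 0 => [:: 0]
  | n.+1 => [seq d + g n.+1 *~ v | d <- Dseq g m n, v <- irange (half_range m n.+1)] end.

Lemma DseqP (G : zmodType) (g : nat -> G) m n c :
  (forall i, (1 <= i)%N -> `|c i| <= (half_range m i)%:Z) -> S g c n.+1 \in Dseq g m n.
Proof.
move=> hc; elim: n => [|n IH]; first by rewrite S_le1 // inE.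
rewrite S_rec //=; apply: (allpairs_f (fun d v => d + g n.+1 *~ v)) => //.
by apply: irangeP; apply: hc.
Qed.

Lemma seq_bound (T : eqType) (R : realType) (s : seq T) (F : T -> R) :
  exists C, forall t, t \in s -> F t <= C.
Proof.
elim: s => [|a s [C hC]]; first by exists 0.
exists (Order.max (F a) C) => t; rewrite inE => /orP [/eqP ->|ts].
  by rewrite le_max lexx.
by rewrite le_max hC ?orbT.
Qed.

Lemma addBB (G : zmodType) (a b c t : G) : (a + b + t) - (a + c + t) = b - c.
Proof. by rewrite (addrAC a b) (addrAC a c) (addrC (a + t) b) addrKA. Qed.

Section Map.
Variables (G G' : zmodType) (H : G -> Prop) (g : nat -> G) (m : nat -> nat).
Variables (H' : G' -> Prop) (g' : nat -> G') (r0 : G -> G').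
Hypothesis sH : subgroup H.
Hypothesis hodd : forall x, odd_order_mod H x.
Hypothesis hidx : forall i, (1 <= i)%N -> has_index (chain_level H g i) (chain_level H g i.-1) (m i).
Hypothesis hun : forall x, exists i, chain_level H g i x.
Hypothesis r0D : forall x y, H x -> H y -> r0 (x + y) = r0 x + r0 y.
Local Notation L := (chain_level H g).
Local Notation f := (fmap H g m g' r0).

Lemma hpart_eq h c N x : H h -> valid m c N -> x = h + S g c N ->
  [/\ hpart H g m x = h, forall i, (1 <= i)%N -> (dig H g m x).1 i = c i
    & valid m (dig H g m x).1 (dig H g m x).2].
Proof.
move=> hh [v1 v2] ex.
have cr : chain_repr H g m x (hpart H g m x).
  by apply: (@epsilon_spec _ _ (fun h => chain_repr H g m x h)); exists h; split=> //; exists c, N.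
case: cr => hp [r' [N' [w1 [w2 ex']]]].
have [e1 _] := repr_uniq sH hodd hidx hp hh (conj w1 w2) (conj v1 v2) (etrans (esym ex') ex).
have dg : valid m (dig H g m x).1 (dig H g m x).2 /\
   x = hpart H g m x + S g (dig H g m x).1 (dig H g m x).2.
  by apply: (@epsilon_spec _ _ (fun p => valid m p.1 p.2 /\ x = hpart H g m x + S g p.1 p.2)); exists (r', N').
case: dg => vd ed; split=> //.
rewrite e1 in ed.
by have [_ e2] := repr_uniq sH hodd hidx hh hh vd (conj v1 v2) (etrans (esym ed) ex).
Qed.

Lemma fmap_eq h c N x : H h -> valid m c N -> x = h + S g c N -> f x = r0 h + S g' c N.
Proof.
move=> hh vc ex; have [e1 e2 vd] := hpart_eq hh vc ex.
by rewrite /fmap e1 (S_same _ vd vc e2).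
Qed.

Lemma fmap_split n v hx rh P : L n v -> H hx -> valid m rh P ->
  (forall i, (i <= n)%N -> rh i = 0) ->
  f (hx + v + S g rh P) = r0 hx + f v + S g' rh P.
Proof.
move=> Lv hx0 [w1 w2] wl.
have [hv [dv [hv0 [[d1 d2] ev]]]] := repr_exists sH hodd hidx Lv.
set Q := maxn P n.+1.
have vc : valid m (fun i => dv i + rh i) Q.
  split=> i hi; first by rewrite d1 ?w1 ?addr0 //; lia.
  have [le|gt] := leqP i n; first by rewrite wl // addr0; exact: d2.
  by rewrite d1 ?add0r //; exact: w2.
rewrite (fmap_eq hv0 (conj d1 d2) ev).
rewrite (@fmap_eq (hx + hv) _ Q _ (sgD sH hx0 hv0) vc).
  rewrite r0D // S_D -(@S_ext _ _ dv n.+1 Q) // -?(@S_ext _ _ rh P Q) //; try lia.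
  by rewrite -!addrA.
rewrite S_D -(@S_ext _ _ dv n.+1 Q) // -?(@S_ext _ _ rh P Q) //; try lia.
by rewrite ev !addrA [hx + hv]addrC.
Qed.

Lemma decomp n x : exists hx u rh P, [/\ H hx, u \in Dseq g m n /\ L n u, valid m rh P,
  (forall i, (i <= n)%N -> rh i = 0) & x = hx + u + S g rh P].
Proof.
have [j Lj] := hun x.
have [hx [rx [hx0 [[v1 v2] ex]]]] := repr_exists sH hodd hidx Lj.
set low := fun i => if (i <= n)%N then rx i else 0.
set high := fun i => if (i <= n)%N then 0 else rx i.
set P := maxn j.+1 n.+1.
exists hx, (S g low n.+1), high, P; split=> //.
- split; last exact: LSc.
  by apply: DseqP => i i1; rewrite /low; case: ifP => _; [exact: v2 | rewrite normr0].
- split.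
  + move=> i hi; rewrite /high; case: ifP => _ //; rewrite v1 //; lia.
  + move=> i i1; rewrite /high; case: ifP => _; [by rewrite normr0 | exact: v2].
- by move=> i hi; rewrite /high hi.
rewrite ex -addrA; congr (_ + _).
rewrite (@S_ext _ _ rx j.+1 P) //; last by lia.
rewrite (@S_ext _ _ low n.+1 P); last by move=> i hi; rewrite /low; case: ifP => //; lia.
  rewrite -S_D; apply: S_eq => i _; rewrite /low /high; case: ifP => _; by rewrite ?addr0 ?add0r.
by lia.
Qed.

Variables (R : realType) (nH : G -> R) (K : nat -> R) (nH' : G' -> R) (K' : nat -> R).
Hypothesis nH0 : forall x, H x -> 0 <= nH x.
Hypothesis nHball : forall rho : R, exists s : seq G, forall x, H x -> nH x <= rho -> x \in s.
Hypothesis Kpos : forall n, (1 <= n)%N -> 0 < K n.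
Hypothesis Kinc : forall n, (1 <= n)%N -> K n < K n.+1.
Hypothesis Kunb : forall M : R, exists n, (1 <= n)%N /\ M < K n.

Lemma Kmono a b : (1 <= a)%N -> (a <= b)%N -> K a <= K b.
Proof.
move=> a1; elim: b => [|b IH] le; first by lia.
have [e|lt] := eqVneq a b.+1; first by rewrite e.
apply: (le_trans (IH _)); first by lia.
by apply: ltW; apply: Kinc; lia.
Qed.

Lemma ball_fin (delta : R) : exists n (s : seq G), forall z,
  Defs.gnorm H g m nH K z <= delta -> L n z /\ hpart H g m z \in s.
Proof.
have [N0 [N01 dN]] := Kunb delta.
have [s hs] := nHball delta.
exists N0, s => z hz.
have [j Lj] := hun z.
have [h [c [hh [vc ez]]]] := repr_exists sH hodd hidx Lj.
have [e1 _ _] := hpart_eq hh vc ez.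
move: hz; rewrite /Defs.gnorm e1.
set w := z - h.
have Lw : L j w by rewrite /w ez addrC addKr; exact: LSc.
have [i0 [Li0 imin]] := @min_ex (fun i => L i w) j Lw.
set Pq := fun v => (H w /\ v = 0) \/ (exists i : nat, (1 <= i)%N /\ L i w /\ ~ L i.-1 w /\ v = K i).
have qP : Pq (quot_norm H g K w).
  apply: (@epsilon_spec _ _ Pq).
  case: i0 Li0 imin => [|i] Li imin.
    by exists 0; left; split=> //; case: (L0 H g w) => hh0 _; exact: hh0.
  exists (K i.+1); right; exists i.+1; split=> //; split=> //; split=> //.
  exact: imin.
have hz : z = h + w by rewrite /w addrC subrK.
case: qP => [[Hw ->]|[i [i1 [Li [_ ->]]]]] hd.
  rewrite addr0 in hd; split; last exact: hs.
  by rewrite hz; apply: (sgD (L_sub g sH N0)); exact: L_H.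
have Ki := Kpos i1.
split; last by apply: hs => //; apply: (le_trans _ hd); rewrite lerDl ltW.
rewrite hz; apply: (sgD (L_sub g sH N0)); first exact: L_H.
apply: (L_mono_le _ Li).
have [//|lt] := leqP i N0.
have : K N0 <= K i by apply: Kmono => //; lia.
have := nH0 hh; move=> a b; exfalso.
have : K i <= delta by apply: le_trans hd; rewrite lerDr.
move=> c1; have := lt_le_trans dN b; rewrite ltNge c1 //.
Qed.

Lemma coarse_fmap : coarse_map (gdist H g m nH K) (gdist H' g' m nH' K') f.
Proof.
move=> delta.
have [n [s hs]] := ball_fin delta.
set Zs := [seq h + u | h <- s, u <- Dseq g m n].
have [C hC] := seq_bound [seq (u, z) | u <- Dseq g m n, z <- Zs]
  (fun p => Defs.gnorm H' g' m nH' K' (f (p.1 + p.2) - f p.1)).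
exists C => x y hxy.
rewrite /gdist in hxy *.
have [z ez0] : exists z, z = y - x by exists (y - x).
rewrite -ez0 in hxy.
have yx : y = x + z by rewrite ez0 [x + _]addrC subrK.
have [Lz hzs] := hs z hxy.
have [h [c [hh [vc ez]]]] := repr_exists sH hodd hidx Lz.
have [e1 _ _] := hpart_eq hh vc ez.
have zZ : z \in Zs.
  rewrite ez; apply: (allpairs_f (fun a b => a + b)); first by rewrite -e1.
  by apply: DseqP; case: vc.
have [hx [u [rh [P [hx0 [uD Lu] vr rl ex]]]]] := decomp n x.
have ey : y = hx + (u + z) + S g rh P.
  by rewrite yx ex -!addrA (addrC z).
rewrite ey ex (fmap_split _ _ vr rl) // ?(fmap_split _ _ vr rl) //; last first.
  by apply: (sgD (L_sub g sH n)).
rewrite addBB.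
exact: (hC (u, z) (allpairs_f (fun a b => (a, b)) uD zZ)).
Qed.

End Map.

Unset Implicit Arguments.
Theorem mainTheorem15 (R : realType) (G G' : zmodType)
  (H : G -> Prop) (H' : G' -> Prop) (r : G -> G')
  (nH : G -> R) (nH' : G' -> R) (g : nat -> G) (g' : nat -> G')
  (m : nat -> nat) (K K' : nat -> R) :
  countable_type G -> countable_type G' ->
  subgroup H -> subgroup H' ->
  (forall x, odd_order_mod H x) -> (forall x', odd_order_mod H' x') ->
  iso_on H H' r ->
  proper_norm H nH ->
  (forall x, H x -> nH' (r x) = nH x) ->
  one_step_chain H g -> one_step_chain H' g' ->
  (forall i, (1 <= i)%N -> has_index (chain_level H g i) (chain_level H g i.-1) (m i)) ->
  (forall i, (1 <= i)%N -> has_index (chain_level H' g' i) (chain_level H' g' i.-1) (m i)) ->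
  admissible H g m nH K -> admissible H' g' m nH' K' ->
  exists f : G -> G', bijective f /\
    coarse_equivalence (gdist H g m nH K) (gdist H' g' m nH' K') f.
Proof.
move=> _ _ sH sH' hodd hodd' [ri1 [ri2 [ri3 ri4]]] [pn1 [pn2 [pn3 pn4]]] hn'
  [_ un] [_ un'] idx idx' [Kp [Ki [Ku _]]] [Kp' [Ki' [Ku' _]]].
have nH0 : forall x, H x -> 0 <= nH x.
  move=> x hx; have := pn3 x (- x) hx (sgN sH hx).
  rewrite addrN pn2 // (proj2 (pn1 0 (sg0 sH)) erefl) => h; lra.
have nH'0 : forall y, H' y -> 0 <= nH' y.
  by move=> y /ri4 [x hx <-]; rewrite hn' //; exact: nH0.
have nH'ball : forall rho : R, exists s : seq G', forall y, H' y -> nH' y <= rho -> y \in s.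
  move=> rho; have [s hs] := pn4 rho; exists [seq r x | x <- s].
  by move=> y /ri4 [x hx <-]; rewrite hn' // => le; apply: map_f; exact: hs.
pose rinv y := epsilon (inhabits 0) (fun x => H x /\ r x = y).
have rinvP : forall y, H' y -> H (rinv y) /\ r (rinv y) = y.
  move=> y /ri4 [x hx ex]; apply: (@epsilon_spec _ _ (fun x => H x /\ r x = y)).
  by exists x.
have rinv_r : forall x, H x -> rinv (r x) = x.
  move=> x hx; have [h1 h2] := rinvP _ (ri1 _ hx); exact: ri3.
have rinvD : forall y1 y2, H' y1 -> H' y2 -> rinv (y1 + y2) = rinv y1 + rinv y2.
  move=> y1 y2 h1 h2; have [a1 b1] := rinvP _ h1; have [a2 b2] := rinvP _ h2.
  have [a3 b3] := rinvP _ (sgD sH' h1 h2).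
  apply: ri3 => //; first exact: sgD.
  by rewrite ri2 // b1 b2 b3.
have fK : forall x, fmap H' g' m g rinv (fmap H g m g' r x) = x.
  move=> x; have [j Lj] := un x.
  have [h [c [hh [vc ex]]]] := repr_exists sH hodd idx Lj.
  rewrite (fmap_eq g' r sH hodd idx hh vc ex).
  by rewrite (fmap_eq g rinv sH' hodd' idx' (ri1 _ hh) vc erefl) rinv_r.
have fK' : forall y, fmap H g m g' r (fmap H' g' m g rinv y) = y.
  move=> y; have [j Lj] := un' y.
  have [h [c [hh [vc ey]]]] := repr_exists sH' hodd' idx' Lj.
  have [hr1 hr2] := rinvP _ hh.
  rewrite (fmap_eq g rinv sH' hodd' idx' hh vc ey).
  by rewrite (fmap_eq g' r sH hodd idx hr1 vc erefl) hr2.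
exists (fmap H g m g' r); split; first by exists (fmap H' g' m g rinv).
split.
  exact: (coarse_fmap H' g' sH hodd idx un ri2 nH' K' nH0 pn4 Kp Ki Ku).
exists (fmap H' g' m g rinv); split.
  exact: (coarse_fmap H g sH' hodd' idx' un' rinvD nH K nH'0 nH'ball Kp' Ki' Ku').
split.
  by exists (gdist H g m nH K 0 0) => x; rewrite fK /gdist !subrr.
by exists (gdist H' g' m nH' K' 0 0) => y; rewrite fK' /gdist !subrr.
Qed.
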